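(* Let $W\in\mathbb{C}[x_1,\dots,x_n]$ be a non-degenerate quasi-homogeneous polynomial with weights $q_i:=\mathrm{wt}(x_i)<1$ for $i=1,\dots,n$. Then there is a constant $C$ depending only on $W$ such that for every $(u_1,\dots,u_n)\in\mathbb{C}^n$ and every $i$, $$|u_i|\le C\Big(\sum_{j=1}^n\Big|\frac{\partial W}{\partial x_j}(u_1,\dots,u_n)\Big|+1\Big)^{\delta_i},\qquad \delta_i=\frac{q_i}{\min_j(1-q_j)}.$$ Moreover, if $q_i\le1/2$ for all $i$ then $\delta_i\le1$ for all $i$, and if $q_i<1/2$ for all $i$ then $\delta_i<1$ for all $i$.
   Context: $W$ is quasi-homogeneous if there are positive integers $d,k_1,\dots,k_n$ with $W(\lambda^{k_1}x_1,\dots,\lambda^{k_n}x_n)=\lambda^dW(x_1,\dots,x_n)$ for all $\lambda\in\mathbb{C}^*$ (taken least); the weight of $x_i$ is $q_i=k_i/d$. $W$ is non-degenerate if the weights $q_i$ are uniquely determined by $W$ and the affine hypersurface $W=0$ has an isolated singularity at the origin (equivalently, the only common zero of all $\partial W/\partial x_j$ is $0$). *)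

(* Defs.v *)
From HB Require Import structures.
From mathcomp Require Import all_boot all_order all_algebra.
From mathcomp Require Import all_classical all_reals all_analysis.
From mathcomp Require Import complex.
From mathcomp Require mpoly.
Set Implicit Arguments. Unset Strict Implicit. Unset Printing Implicit Defensive.
Import Order.TTheory GRing.Theory Num.Theory.
Local Open Scope ring_scope.

Notation cpoly R n := (@mpoly.mpoly n (complex R)).

Definition ev {R : rcfType} {n : nat} (W : cpoly R n) (x : 'I_n -> R[i]) : R[i] :=
  mpoly.meval x W.

Definition pderiv {R : rcfType} {n : nat} (j : 'I_n) (W : cpoly R n) : cpoly R n :=
  mpoly.mderiv j W.

Definition qh_weights {R : rcfType} {n : nat} (W : cpoly R n) (q : 'I_n -> rat) : Prop :=
  exists (d : nat) (k : 'I_n -> nat),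
    (0 < d)%N /\ (forall i, 0 < k i)%N /\
    (forall i, q i = (k i)%:R / d%:R) /\
    (forall (l : R[i]) (x : 'I_n -> R[i]), l != 0 ->
       ev W (fun i => l ^+ k i * x i) = l ^+ d * ev W x).

Definition nondegenerate_qh {R : rcfType} {n : nat} (W : cpoly R n) (q : 'I_n -> rat) : Prop :=
  [/\ qh_weights W q,
      (forall q' : 'I_n -> rat, qh_weights W q' -> forall i, q' i = q i) &
      (forall x : 'I_n -> R[i], (forall j, ev (pderiv j W) x = 0) -> forall i, x i = 0)].

(* min_j (1 - q_j)  (for n >= 1 the neutral element 1 plays no role since q_j > 0) *)
Definition min_defect {n : nat} (q : 'I_n -> rat) : rat :=
  \big[Order.min/1]_(j < n) (1 - q j).

Definition delta {n : nat} (q : 'I_n -> rat) (i : 'I_n) : rat := q i / min_defect q.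

(* modulus |z| of a complex number z = a + ib, as a real number sqrt(a^2+b^2) *)
Definition cabs {R : rcfType} (z : R[i]) : R := ComplexField.Normc.normc z.

(* Main.v *)
From HB Require Import structures.
From mathcomp Require Import all_boot all_order all_algebra.
From mathcomp Require Import mpoly.
Require Import Defs.
From mathcomp Require Import all_classical all_reals all_analysis.
From mathcomp Require Import complex.
From mathcomp Require Import lra.
Import Order.TTheory GRing.Theory Num.Theory.
Import numFieldNormedType.Exports.
Set Implicit Arguments. Unset Strict Implicit. Unset Printing Implicit Defensive.
Local Open Scope ring_scope.

Section PolyPart.
Variable (F : numFieldType) (n : nat).

Lemma poly_ext (p q : {poly F}) : (forall y, p.[y] = q.[y]) -> p = q.
Proof.
move=> H; apply/eqP; rewrite -subr_eq0; apply/eqP.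
set r := p - q.
have rr : forall y, root r y by move=> y; rewrite /root /r hornerD hornerN H subrr.
apply/eqP; apply/negPn/negP => r0.
have Ha : all (root r) [seq i%:R | i <- iota 0 (size r)] by apply/allP => y _; exact: rr.
have Hu : uniq [seq (i%:R : F) | i <- iota 0 (size r)].
  by rewrite map_inj_uniq ?iota_uniq // => a b /eqP; rewrite eqr_nat => /eqP.
have := max_poly_roots r0 Ha Hu.
by rewrite size_map size_iota ltnn.
Qed.

Definition hx (x : 'I_n -> F) (j : 'I_n) i : {poly F} := (x i)%:P + (i == j)%:R *: 'X.
Definition Phi x j (p : {mpoly F[n]}) : {poly F} := mmap (@polyC F) (hx x j) p.

Lemma Phi_horner x j p y : (Phi x j p).[y] = p.@[fun i => x i + (i == j)%:R * y].
Proof.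
rewrite /Phi /mmap mevalE horner_sum; apply: eq_bigr => m _.
rewrite hornerM hornerC /mmap1 horner_prod; congr (_ * _); apply: eq_bigr => i _.
by rewrite horner_exp /hx hornerD hornerC hornerZ hornerX.
Qed.

Lemma Phi_mono x j m :
  (mmap1 (hx x j) m)^`().[0] = (m j)%:R * \prod_i x i ^+ (m - U_(j))%MM i.
Proof.
rewrite /mmap1 (bigD1 j) //= [X in _ = _ * X](bigD1 j) //=.
have -> : \prod_(i < n | i != j) hx x j i ^+ m i = (\prod_(i < n | i != j) x i ^+ (m - U_(j))%MM i)%:P.
  rewrite rmorph_prod; apply: eq_bigr => i ij.
  by rewrite /hx (negbTE ij) scale0r addr0 rmorphXn mnmBE mnm1E eq_sym (negbTE ij) subn0.
rewrite derivM derivC mulr0 addr0 deriv_exp hornerM hornerC hornerMn hornerM horner_exp.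
rewrite /hx eqxx scale1r derivD derivC derivX add0r hornerD hornerC hornerX addr0 hornerC.
rewrite mnmBE mnm1E eqxx subn1 mul1r -mulr_natl mulrA.
by [].
Qed.

Lemma Phi_deriv0 x j p : (Phi x j p)^`().[0] = (mderiv j p).@[x].
Proof.
rewrite /Phi /mmap raddf_sum horner_sum /=.
have E : mderiv j p = \sum_(m <- msupp p) mderiv j (p@_m *: 'X_[m]).
  by rewrite {1}(mpolyE p) raddf_sum.
rewrite E raddf_sum /=.
apply: eq_bigr => m _.
by rewrite deriv_mulC hornerM hornerC Phi_mono mderivZ mderivX mevalZ mevalZ mevalX mulrA.
Qed.

Lemma deriv_scaling (W : {mpoly F[n]}) (d : nat) (k : 'I_n -> nat)
  (H : forall (l : F) (x : 'I_n -> F), l != 0 -> W.@[fun i => l ^+ k i * x i] = l ^+ d * W.@[x])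
  (l : F) (x : 'I_n -> F) (j : 'I_n) : l != 0 ->
  (mderiv j W).@[fun i => l ^+ k i * x i] = l ^+ d / l ^+ k j * (mderiv j W).@[x].
Proof.
move=> l0.
set xs := fun i => l ^+ k i * x i.
set c := (l ^+ k j)^-1.
have lk0 : l ^+ k j != 0 by rewrite expf_neq0.
have E : Phi xs j W = l ^+ d *: (Phi x j W \Po (c *: 'X)).
  apply: poly_ext => y.
  rewrite Phi_horner hornerZ horner_comp Phi_horner hornerZ hornerX -H //.
  apply: meval_eq => i /=; rewrite /xs.
  case: (eqVneq i j) => [->|ne]; last by rewrite !mul0r !addr0.
  by rewrite !mul1r mulrDr /c mulrA divff // mul1r.
rewrite -!Phi_deriv0 E derivZ deriv_comp derivZ derivX hornerZ hornerM horner_comp.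
rewrite !hornerZ hornerX mulr0 hornerC mulr1.
by rewrite [_ * c]mulrC mulrA.
Qed.

End PolyPart.

Section CabsLemmas.
Variable R : realType.

Lemma cabsE (z : R[i]) : cabs z = Num.sqrt (complex.Re z ^+ 2 + complex.Im z ^+ 2).
Proof. by case: z. Qed.
Lemma cabs_ge0 (z : R[i]) : 0 <= cabs z.
Proof. by rewrite cabsE sqrtr_ge0. Qed.
Lemma cabsM (z w : R[i]) : cabs (z * w) = cabs z * cabs w.
Proof. exact: ComplexField.Normc.normcM. Qed.
Lemma cabs0 : cabs (0 : R[i]) = 0.
Proof. exact: ComplexField.Normc.normc0. Qed.
Lemma cabs_eq0 (z : R[i]) : cabs z = 0 -> z = 0.
Proof. exact: ComplexField.Normc.eq0_normc. Qed.
Lemma cabs_real (t : R) : 0 <= t -> cabs ((t%:C)%C) = t.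
Proof. by move=> t0; rewrite cabsE /= expr0n /= addr0 sqrtr_sqr ger0_norm. Qed.
Lemma Re_le (z : R[i]) : `|complex.Re z| <= cabs z.
Proof. by rewrite cabsE -sqrtr_sqr ler_wsqrtr // lerDl sqr_ge0. Qed.
Lemma Im_le (z : R[i]) : `|complex.Im z| <= cabs z.
Proof. by rewrite cabsE -sqrtr_sqr ler_wsqrtr // lerDr sqr_ge0. Qed.

Lemma ReD (x y : R[i]) : complex.Re (x + y) = complex.Re x + complex.Re y. Proof. by case: x; case: y. Qed.
Lemma ImD (x y : R[i]) : complex.Im (x + y) = complex.Im x + complex.Im y. Proof. by case: x; case: y. Qed.
Lemma ReM (x y : R[i]) : complex.Re (x * y) = complex.Re x * complex.Re y - complex.Im x * complex.Im y. Proof. by case: x; case: y. Qed.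
Lemma ImM (x y : R[i]) : complex.Im (x * y) = complex.Re x * complex.Im y + complex.Im x * complex.Re y. Proof. by case: x; case: y. Qed.

Variable T : topologicalType.

Definition ctsC (g : T -> R[i]) :=
  continuous (fun v => complex.Re (g v)) /\ continuous (fun v => complex.Im (g v)).

Lemma contD (a b : T -> R) : continuous a -> continuous b -> continuous (fun v => a v + b v).
Proof. by move=> ha hb x; exact: (continuousD (ha x) (hb x)). Qed.
Lemma contB (a b : T -> R) : continuous a -> continuous b -> continuous (fun v => a v - b v).
Proof. by move=> ha hb x; exact: (continuousB (ha x) (hb x)). Qed.
Lemma contM (a b : T -> R) : continuous a -> continuous b -> continuous (fun v => a v * b v).
Proof. by move=> ha hb x; exact: (continuousM (ha x) (hb x)). Qed.

Lemma ctsC_cst c : ctsC (fun _ => c).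
Proof. by split; apply: cst_continuous. Qed.

Lemma ctsC_add f g : ctsC f -> ctsC g -> ctsC (fun v => f v + g v).
Proof.
move=> [f1 f2] [g1 g2]; split.
  under eq_fun do rewrite ReD; exact: contD.
under eq_fun do rewrite ImD; exact: contD.
Qed.

Lemma ctsC_mul f g : ctsC f -> ctsC g -> ctsC (fun v => f v * g v).
Proof.
move=> [f1 f2] [g1 g2]; split.
  by under eq_fun do rewrite ReM; apply: contB; apply: contM.
by under eq_fun do rewrite ImM; apply: contD; apply: contM.
Qed.

Lemma ctsC_exp f k : ctsC f -> ctsC (fun v => f v ^+ k).
Proof.
move=> hf; elim: k => [|k IH].
  by under eq_fun do rewrite expr0; exact: ctsC_cst.
by under eq_fun do rewrite exprS; exact: ctsC_mul.
Qed.

Lemma ctsC_sum I (s : seq I) (P : pred I) (f : I -> T -> R[i]) :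
  (forall i, ctsC (f i)) -> ctsC (fun v => \sum_(i <- s | P i) f i v).
Proof.
move=> H; elim: s => [|a s IH].
  by under eq_fun do rewrite big_nil; exact: ctsC_cst.
under eq_fun do rewrite big_cons.
case: (P a) => //; exact: ctsC_add.
Qed.

Lemma ctsC_prod I (s : seq I) (P : pred I) (f : I -> T -> R[i]) :
  (forall i, ctsC (f i)) -> ctsC (fun v => \prod_(i <- s | P i) f i v).
Proof.
move=> H; elim: s => [|a s IH].
  by under eq_fun do rewrite big_nil; exact: ctsC_cst.
under eq_fun do rewrite big_cons.
case: (P a) => //; exact: ctsC_mul.
Qed.

Lemma ctsC_meval n (p : {mpoly R[i][n]}) (e : T -> 'I_n -> R[i]) :
  (forall i, ctsC (fun v => e v i)) -> ctsC (fun v => p.@[e v]).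
Proof.
move=> He; under eq_fun do rewrite mevalE.
apply: ctsC_sum => m; apply: ctsC_mul; first exact: ctsC_cst.
by apply: ctsC_prod => i; apply: ctsC_exp.
Qed.

Lemma cont_sumR I (s : seq I) (P : pred I) (f : I -> T -> R) :
  (forall i, continuous (f i)) -> continuous (fun v => \sum_(i <- s | P i) f i v).
Proof.
move=> H; elim: s => [|a s IH].
  by under eq_fun do rewrite big_nil; apply: cst_continuous.
under eq_fun do rewrite big_cons.
case: (P a) => //; exact: contD.
Qed.

Lemma cont_cabs g : ctsC g -> continuous (fun v => cabs (g v)).
Proof.
move=> [h1 h2].
have -> : (fun v => cabs (g v)) = Num.sqrt \o (fun v => complex.Re (g v) * complex.Re (g v) + complex.Im (g v) * complex.Im (g v)).
  by apply: funext => v; rewrite /= cabsE !expr2.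
move=> x; apply: continuous_comp; last exact: sqrt_continuous.
by apply: contD; apply: contM.
Qed.

End CabsLemmas.
Arguments ctsC {R T}.

Section Compact.
Variables (R : realType) (n : nat) (W : cpoly R n).
Local Open Scope classical_set_scope.

Definition fW (u : 'I_n -> R[i]) : R := \sum_(j < n) cabs (ev (pderiv j W) u).
Definition emb (v : 'rV[R]_(n + n)) (i : 'I_n) : R[i] :=
  Complex (v ord0 (lshift n i)) (v ord0 (rshift n i)).

Lemma ctsC_emb i : ctsC (fun v => emb v i).
Proof. by split; apply: coord_continuous. Qed.

Lemma cont_F : continuous (fun v => fW (emb v)).
Proof.
rewrite /fW; apply: cont_sumR => j; apply: cont_cabs.
rewrite /ev /pderiv; apply: ctsC_meval; exact: ctsC_emb.
Qed.

Lemma emb_surj u : exists v, emb v = u.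
Proof.
exists (row_mx (\row_i complex.Re (u i)) (\row_i complex.Im (u i))).
apply: funext => i; rewrite /emb row_mxEl row_mxEr !mxE.
by case: (u i).
Qed.

Lemma lower_bound :
  (forall x, (forall j, ev (pderiv j W) x = 0) -> forall i, x i = 0) ->
  exists2 m : R, 0 < m & forall u, (forall i, cabs (u i) <= 1) ->
     (exists i, 1 <= cabs (u i)) -> m <= fW u.
Proof.
move=> hnd.
pose S := [set v : 'rV[R]_(n + n) | (forall i, cabs (emb v i) <= 1) /\ (exists i, 1 <= cabs (emb v i))].
have Spos : forall v, S v -> 0 < fW (emb v).
  move=> v [_ [i hi]]; rewrite lt_def sumr_ge0 ?andbT; last by move=> j _; exact: cabs_ge0.
  apply/eqP => E.
  have H := psumr_eq0P (fun j _ => @cabs_ge0 R _) E.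
  have := hnd (emb v) (fun j => cabs_eq0 (H j isT)) i.
  by move=> e; rewrite e cabs0 ler10 in hi.
have Scl : closed S.
  have -> : S = (\bigcap_(i in [set: 'I_n]%classic) ((fun v => cabs (emb v i)) @^-1` [set x | x <= 1]))
     `&` (\bigcup_(i in [set: 'I_n]%classic) ((fun v => cabs (emb v i)) @^-1` [set x | 1 <= x])).
    apply/seteqP; split => v /=.
      by move=> [h1 [i h2]]; split; [move=> j _; exact: h1 | exists i].
    by move=> [h1 [i _ h2]]; split; [move=> j; exact: h1 | exists i].
  apply: closedI.
    apply: closed_bigI => i _; apply: (proj1 (continuous_closedP _)).
      by apply: cont_cabs; exact: ctsC_emb.
    exact: closed_le.
  apply: closed_bigcup; first exact: finite_finset.
  move=> i _; apply: (proj1 (continuous_closedP _)).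
    by apply: cont_cabs; exact: ctsC_emb.
  exact: closed_ge.
have Scp : compact S.
  have Bc := @rV_compact R (n + n) (fun=> `[-1, 1]%classic) (fun=> @segment_compact R (-1) 1).
  apply: (subclosed_compact Scl Bc).
  move=> v [h1 _] k /=; rewrite -(splitK k); case: (fintype.split k) => i /=; rewrite in_itv /= -ler_norml.
    exact: le_trans (Re_le (emb v i)) (h1 i).
  exact: le_trans (Im_le (emb v i)) (h1 i).
have Fc : {within S, continuous (fun v => fW (emb v))}.
  by apply: continuous_subspaceT; exact: cont_F.
case: (pselect (S !=set0)) => [S0|S0].
  have [c cS cmin] := compact_EVT_min S0 Scp Fc.
  exists (fW (emb c)); first by apply: Spos; rewrite inE in cS.
  move=> u h1 h2; have [v ev] := emb_surj u.
  rewrite -ev; apply: cmin; rewrite inE; split; rewrite ev //.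
exists 1 => // u h1 h2; exfalso; apply: S0.
have [v ev] := emb_surj u.
by exists v; split; rewrite ev.
Qed.

End Compact.

Lemma gk (R : realType) (a : R) (kk : nat) : 0 <= a -> (0 < kk)%N ->
  a = (a `^ (kk%:R^-1)) ^+ kk.
Proof.
move=> a0 k0; rewrite -powR_mulrn ?powR_ge0 // -powRrM mulVf ?powRr1 //.
by rewrite pnatr_eq0 -lt0n.
Qed.

Unset Implicit Arguments.

Theorem theorem5p8 (R : realType) (n : nat) (W : cpoly R n) (q : 'I_n -> rat) :
  nondegenerate_qh W q ->
  (forall i, q i < 1) ->
  [/\ exists C : R, forall (u : 'I_n -> R[i]) (i : 'I_n),
        cabs (u i) <= C * ((\sum_(j < n) cabs (ev (pderiv j W) u) + 1) `^ (ratr (delta q i) : R)),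
      ((forall i, q i <= 1/2) -> forall i, delta q i <= 1) &
      ((forall i, q i < 1/2) -> forall i, delta q i < 1)].
Proof.
move=> [[d [k [d0 [k0 [hq hH]]]]] _ hnd] hq1.
have dR0 : (0 : rat) < d%:R by rewrite ltr0n.
have kd : forall i, (k i < d)%N.
  by move=> i; have := hq1 i; rewrite hq ltr_pdivrMr // mul1r ltr_nat.
have q0 : forall i, 0 <= q i by move=> i; rewrite hq divr_ge0 ?ler0n.
have mu_le : forall j, min_defect q <= 1 - q j.
  by move=> j; rewrite /min_defect; exact: bigmin_le.
have mu_pos : 0 < min_defect q.
  rewrite /min_defect; apply: lt_bigmin => // j _; by rewrite subr_gt0.
split; last first.
- move=> h i; rewrite /delta.
  have mu2 : 1/2 < min_defect q.
    rewrite /min_defect; apply: lt_bigmin => [|j _].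
      by lra.
    by have := h j; lra.
  by rewrite ltr_pdivrMr // mul1r (lt_trans (h i)).
- move=> h i; rewrite /delta.
  have mu2 : 1/2 <= min_defect q.
    rewrite /min_defect; apply: le_bigmin => [|j _].
      by lra.
    by have := h j; lra.
  by rewrite ler_pdivrMr // mul1r (le_trans (h i)).
have [m m0 hm] := lower_bound hnd.
pose dl i : R := ratr (delta q i).
have dl0 : forall i, 0 <= dl i.
  by move=> i; rewrite /dl ler0q /delta divr_ge0 // ltW.
pose C : R := 1 + \sum_i m `^ (- dl i).
have C1 : 1 <= C by rewrite /C lerDl sumr_ge0 // => j _; exact: powR_ge0.
have Cge : forall j, m `^ (- dl j) <= C.
  move=> j; rewrite /C (bigD1 j) //= addrA [1 + _]addrC -addrA lerDl.
  by rewrite addr_ge0 // sumr_ge0 // => l _; exact: powR_ge0.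
exists C => u i.
set f := \sum_(j < n) cabs (ev (pderiv j W) u).
have f0 : 0 <= f by apply: sumr_ge0 => j _; exact: cabs_ge0.
have X1 : 1 <= (f + 1) `^ dl i.
  have := @ler_powR _ (f + 1) _ 0 (dl i) (dl0 i); rewrite powRr0; apply.
  by rewrite lerDr.
have [jm _ Hjm] := @arg_maxnP _ i xpredT k isT.
pose g j := cabs (u j) `^ ((k j)%:R^-1).
have [i0 _ Hi0] := @real_arg_maxP R _ i xpredT g isT (fun j _ => num_real _).
have gk' : forall j, cabs (u j) = g j ^+ k j.
  by move=> j; apply: gk; [exact: cabs_ge0 | exact: k0].
have [t1|t1] := ltP (g i0) 1.
  have : cabs (u i) <= 1.
    rewrite gk'; apply: exprn_ile1; first exact: powR_ge0.
    exact: ltW (le_lt_trans (Hi0 i isT) t1).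
  move=> ui; apply: (le_trans ui); exact: mulr_ege1.
set t := g i0.
have t0 : 0 < t by apply: lt_le_trans t1.
have tk : forall j, cabs (u j) <= t ^+ k j.
  move=> j; rewrite gk'; apply: lerXn2r; rewrite ?nnegrE ?powR_ge0 ?(ltW t0) //.
  exact: (Hi0 j isT).
pose v j := u j * (((t ^+ k j)^-1)%:C)%C.
have tkn0 : forall j, t ^+ k j != 0 by move=> j; rewrite expf_neq0 // gt_eqF.
have cv : forall j, cabs (v j) = cabs (u j) / t ^+ k j.
  by move=> j; rewrite /v cabsM cabs_real // invr_ge0 exprn_ge0 // ltW.
have hv1 : forall j, cabs (v j) <= 1.
  by move=> j; rewrite cv ler_pdivrMr ?exprn_gt0 // mul1r.
have hv2 : 1 <= cabs (v i0).
  by rewrite cv [cabs (u i0)]gk' -/t divff.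
have ue : u = fun j => ((t%:C)%C) ^+ k j * v j.
  apply: funext => j; rewrite /v mulrCA -rmorphXn -rmorphM divff //.
  by rewrite rmorph1 mulr1.
have fu : t ^+ (d - k jm) * fW W v <= f.
  rewrite /f /fW mulr_sumr; apply: ler_sum => j _.
  rewrite [in X in _ <= X]ue /ev /pderiv (deriv_scaling (fun l x l0 => hH l x l0)); last first.
    by apply/eqP => /(congr1 (@complex.Re R)) /= /eqP; rewrite gt_eqF.
  rewrite cabsM -rmorphXn -rmorphXn -fmorphV -rmorphM -expfB ?kd // cabs_real; last first.
    by rewrite exprn_ge0 // ltW.
  apply: ler_wpM2r; first exact: cabs_ge0.
  apply: ler_weXn2l; first exact: t1.
  by apply: leq_sub2l; exact: (Hjm j isT).
have fu2 : t ^+ (d - k jm) * m <= f.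
  apply: le_trans fu; apply: ler_wpM2l; first by rewrite exprn_ge0 // ltW.
  by apply: hm => //; exists i0.
apply: le_trans (tk i) _.
have key : t ^+ k i <= (t ^+ (d - k jm)) `^ dl i.
  rewrite -!powR_mulrn ?(ltW t0) // -powRrM; apply: ler_powR => //.
  rewrite /dl -[(k i)%:R](ratr_nat R) -[(d - k jm)%:R](ratr_nat R) -rmorphM ler_rat.
  have e1 : min_defect q <= (d - k jm)%:R / d%:R.
    apply: le_trans (mu_le jm) _.
    by rewrite hq natrB ?(ltnW (kd jm)) // mulrBl divff // gt_eqF.
  rewrite /delta mulrA ler_pdivlMr // hq mulrCA.
  by apply: ler_wpM2l => //; rewrite ler0n.
have hpow : (t ^+ (d - k jm)) `^ dl i * m `^ dl i <= (f + 1) `^ dl i.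
  rewrite -powRM ?exprn_ge0 ?(ltW m0) ?(ltW t0) //.
  apply: ge0_ler_powR; first exact: dl0.
  - by rewrite nnegrE mulr_ge0 ?exprn_ge0 ?(ltW m0) ?(ltW t0).
  - by rewrite nnegrE addr_ge0.
  by apply: le_trans fu2 _; rewrite lerDl.
have mp : 0 < m `^ dl i by apply: powR_gt0.
apply: le_trans key _.
rewrite -(mulfK (lt0r_neq0 mp) ((t ^+ (d - k jm)) `^ dl i)).
apply: le_trans (_ : (f + 1) `^ dl i * (m `^ dl i)^-1 <= _).
  by apply: ler_wpM2r; [rewrite invr_ge0 ltW | exact: hpow].
rewrite mulrC -powRN; apply: ler_wpM2r; [exact: powR_ge0 | exact: Cge].
Qed.
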